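(* Let $p$ be a prime and $n$ a positive integer, let $T_n(\mathbf{Q}_p)$ be the ring of upper-triangular $n\times n$ matrices over $\mathbf{Q}_p$, and for $A=\{a_{j,k}\}\in T_n(\mathbf{Q}_p)$ put $$N(A)=\max_{1\le j<k\le n}|a_{j,k}|_p^{1/(k-j)}.$$ For $r\in\mathbf{Q}_p$ let $\delta_r(A)$ be the matrix whose $(j,k)$ entry is $r^{k-j}a_{j,k}$ for $j<k$, $a_{j,j}$ for $j=k$, and $0$ for $j>k$. Then $N(A+A')\le\max(N(A),N(A'))$ and $N(\delta_r(A))=|r|_pN(A)$ for all $A,A'\in T_n(\mathbf{Q}_p)$, $r\in\mathbf{Q}_p$; and if $A,A'\in T_n(\mathbf{Q}_p)$ have all their diagonal entries in $\mathbf{Z}_p$, then $N(AA')\le\max(N(A),N(A'))$.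
   Context: $|\cdot|_p$ is the $p$-adic absolute value on $\mathbf{Q}_p$, and $\mathbf{Z}_p=\{x\in\mathbf{Q}_p:|x|_p\le1\}$. For $n=1$ the maximum over an empty set is taken to be $0$. *)

(* Defs.v *)
From HB Require Import structures.
From mathcomp Require Import all_boot all_order all_algebra.
From mathcomp Require Import all_classical all_reals all_analysis.
Set Implicit Arguments. Unset Strict Implicit. Unset Printing Implicit Defensive.
Import Order.TTheory GRing.Theory Num.Theory.
Local Open Scope ring_scope.

(* Characterization of (Q_p, |.|_p) up to isometric isomorphism:
   K is a field of characteristic 0 with a real-valued absolute value
   [abs] that is multiplicative, definite, ultrametric, normalized by
   |p| = 1/p, in which Q is dense and which is complete.  By Ostrowski
   the restriction of [abs] to Q is the p-adic absolute value, so K is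
   the completion Q_p of Q with respect to |.|_p. *)
Definition is_Qp (R : realType) (p : nat) (K : fieldType) (abs : K -> R) : Prop :=
  [/\ [pchar K] =i pred0,
      [/\ (forall x, 0 <= abs x) /\ (forall x, abs x = 0 <-> x = 0),
      (forall x y, abs (x * y) = abs x * abs y),
      (forall x y, abs (x + y) <= Num.max (abs x) (abs y))
        & abs (p%:R) = (p%:R)^-1],
      (forall (x : K) (e : R), 0 < e -> exists q : rat, abs (x - ratr q) < e)
    & (forall u : nat -> K,
         (forall e : R, 0 < e -> exists N, forall m n,
             (N <= m)%N -> (N <= n)%N -> abs (u m - u n) < e) ->
         exists l, forall e : R, 0 < e -> exists N, forall n,
             (N <= n)%N -> abs (u n - l) < e)].

Definition upper_tri (K : fieldType) (n : nat) (A : 'M[K]_n) : Prop :=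
  forall j k : 'I_n, (k < j)%N -> A j k = 0.

Definition Nnorm (R : realType) (K : fieldType) (abs : K -> R) (n : nat)
    (A : 'M[K]_n) : R :=
  \big[Num.max/0]_(j < n) \big[Num.max/0]_(k < n | (j < k)%N)
     powR (abs (A j k)) ((k - j)%N%:R^-1).

Definition delta (K : fieldType) (n : nat) (r : K) (A : 'M[K]_n) : 'M[K]_n :=
  \matrix_(j, k) (if (j < k)%N then r ^+ (k - j) * A j k
                  else if j == k then A j j else 0).

(* Main.v *)
Require Import Defs.
From HB Require Import structures.
From mathcomp Require Import all_boot all_order all_algebra.
From mathcomp Require Import all_classical all_reals all_analysis.
Import Order.TTheory GRing.Theory Num.Theory.
Local Open Scope ring_scope.

Section Helpers.
Variables (R : realType) (K : fieldType) (abs : K -> R).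
Hypothesis ge0 : forall x, 0 <= abs x.
Hypothesis eq0 : forall x, abs x = 0 <-> x = 0.
Hypothesis absM : forall x y, abs (x * y) = abs x * abs y.
Hypothesis ultra : forall x y, abs (x + y) <= Num.max (abs x) (abs y).

Lemma abs0 : abs 0 = 0.
Proof. by apply/eq0. Qed.

Lemma absX x m : abs (x ^+ m) = abs x ^+ m.
Proof.
elim: m => [|m IH].
  rewrite !expr0; have := absM 1 1; rewrite mulr1 => h.
  have: abs 1 != 0 by apply/eqP => /eq0 /eqP; rewrite oner_eq0.
  move=> nz; apply: (mulfI nz); rewrite mulr1 -h //.
by rewrite !exprS absM IH.
Qed.

Lemma abs_sum (I : Type) (r : seq I) (P : pred I) (F : I -> K) (c : R) :
  0 <= c -> (forall i, P i -> abs (F i) <= c) -> abs (\sum_(i <- r | P i) F i) <= c.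
Proof.
move=> c0 H; elim/big_rec: _ => [|i x Pi IH]; first by rewrite abs0.
apply: le_trans (ultra _ _) _; rewrite ge_max H //.
Qed.

Lemma root_pow (x : R) m : (0 < m)%N -> 0 <= x -> powR (x ^+ m) (m%:R^-1) = x.
Proof.
move=> m0 x0; rewrite -powR_mulrn // -powRrM mulfV ?powRr1 //.
by rewrite pnatr_eq0 -lt0n.
Qed.

Lemma pow_root (x : R) m : (0 < m)%N -> 0 <= x -> powR x (m%:R^-1) ^+ m = x.
Proof.
move=> m0 x0; rewrite -powR_mulrn ?powR_ge0 // -powRrM mulVf ?powRr1 //.
by rewrite pnatr_eq0 -lt0n.
Qed.

Variable n : nat.

Lemma Nnorm_ge0 (A : 'M[K]_n) : 0 <= Nnorm abs A.
Proof.
rewrite /Nnorm; elim/big_rec: _ => // j x _ H; rewrite le_max H orbT //.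
Qed.

Lemma Nnorm_le (A : 'M[K]_n) c : 0 <= c ->
  (forall j k : 'I_n, (j < k)%N -> powR (abs (A j k)) ((k - j)%N%:R^-1) <= c) ->
  Nnorm abs A <= c.
Proof.
move=> c0 H; apply: bigmax_le => // j _; apply: bigmax_le => // k jk; exact: H.
Qed.

Lemma Nnorm_ge (A : 'M[K]_n) (j k : 'I_n) : (j < k)%N ->
  powR (abs (A j k)) ((k - j)%N%:R^-1) <= Nnorm abs A.
Proof.
move=> jk; rewrite /Nnorm.
apply: le_trans (le_bigmax _ _ j).
by apply: (le_bigmax_cond _ (fun k => powR (abs (A j k)) ((k - j)%N%:R^-1)) jk).
Qed.

Lemma entry_le (A : 'M[K]_n) (j k : 'I_n) M : (j < k)%N -> Nnorm abs A <= M ->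
  abs (A j k) <= M ^+ (k - j).
Proof.
move=> jk NM; have m0 : (0 < k - j)%N by rewrite subn_gt0.
rewrite -(pow_root _ _ m0 (ge0 (A j k))); apply: lerXn2r.
- by rewrite nnegrE powR_ge0.
- by rewrite nnegrE (le_trans (Nnorm_ge0 A)).
by apply: le_trans NM; apply: Nnorm_ge.
Qed.

Lemma entry_le' (A : 'M[K]_n) (j l : 'I_n) M : (j <= l)%N -> Nnorm abs A <= M ->
  (forall i, abs (A i i) <= 1) -> abs (A j l) <= M ^+ (l - j).
Proof.
rewrite leq_eqVlt => /orP[/eqP jl|jl] NM d; last exact: entry_le.
have -> : j = l by apply: val_inj.
by rewrite subnn expr0.
Qed.

End Helpers.

Theorem mainTheorem4 (R : realType) (p : nat) (K : fieldType) (abs : K -> R)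
    (n : nat) :
  prime p -> (0 < n)%N -> is_Qp p abs ->
  [/\ (forall A A' : 'M[K]_n, upper_tri A -> upper_tri A' ->
         Nnorm abs (A + A') <= Num.max (Nnorm abs A) (Nnorm abs A')),
      (forall (A : 'M[K]_n) (r : K), upper_tri A ->
         Nnorm abs (delta r A) = abs r * Nnorm abs A)
    & (forall A A' : 'M[K]_n, upper_tri A -> upper_tri A' ->
         (forall i, abs (A i i) <= 1) -> (forall i, abs (A' i i) <= 1) ->
         Nnorm abs (A *m A') <= Num.max (Nnorm abs A) (Nnorm abs A'))].
Proof.
move=> _ _ [_ [[ge0 eq0] absM ultra _] _ _].
have mpos (j k : 'I_n) : (j < k)%N -> 0 <= ((k - j)%N%:R^-1 : R).
  by move=> _; rewrite invr_ge0 ler0n.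
split.
- move=> A A' _ _; apply: Nnorm_le => //.
    by rewrite le_max Nnorm_ge0.
  move=> j k jk; rewrite mxE.
  apply: le_trans (ge0_ler_powR (mpos _ _ jk) _ _ (ultra _ _)) _.
  + by rewrite nnegrE.
  + by rewrite nnegrE le_max ge0.
  have [h|h] := leP (abs (A j k)) (abs (A' j k)).
  + rewrite le_max; apply/orP; right; exact: Nnorm_ge.
  + rewrite le_max; apply/orP; left; exact: Nnorm_ge.
- move=> A r _.
  have term (j k : 'I_n) : (j < k)%N ->
      powR (abs (delta r A j k)) ((k - j)%N%:R^-1) =
      abs r * powR (abs (A j k)) ((k - j)%N%:R^-1).
    move=> jk; rewrite mxE jk absM absX // powRM ?exprn_ge0 //.
    by rewrite root_pow ?subn_gt0 ?ge0.
  rewrite /Nnorm.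
  rewrite (big_morph (fun x => abs r * x) (id1 := 0) (op1 := Num.max)
     (fun x y => maxr_pMr x y (ge0 r)) (mulr0 _)).
  apply: eq_bigr => j _.
  rewrite (big_morph (fun x => abs r * x) (id1 := 0) (op1 := Num.max)
     (fun x y => maxr_pMr x y (ge0 r)) (mulr0 _)).
  by apply: eq_bigr => k jk; apply: term.
- move=> A A' uA uA' dA dA'.
  set M := Num.max (Nnorm abs A) (Nnorm abs A').
  have M0 : 0 <= M by rewrite le_max Nnorm_ge0.
  apply: Nnorm_le => // j k jk.
  have m0 : (0 < k - j)%N by rewrite subn_gt0.
  rewrite -(@root_pow _ M (k-j)%N m0 M0).
  apply: ge0_ler_powR.
  + exact: mpos.
  + by rewrite nnegrE.
  + by rewrite nnegrE exprn_ge0.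
  rewrite mxE; apply: abs_sum => //; first by rewrite exprn_ge0.
  move=> l _.
  have [lj|jl] := ltnP l j.
    by rewrite uA // mul0r abs0 ?exprn_ge0.
  have [kl|lk] := ltnP k l.
    by rewrite uA' // mulr0 abs0 ?exprn_ge0.
  rewrite absM.
  have -> : (k - j = (l - j) + (k - l))%N by rewrite addnC addnBA // subnK.
  rewrite exprD; apply: ler_pM; rewrite ?ge0 //.
  + apply: entry_le' => //; rewrite le_max lexx //.
  + apply: entry_le' => //; rewrite le_max lexx orbT //.
Qed.
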